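(* Let $\mathbf{J}\in\mathbb{R}^{n\times p}$, $\mathbf{J}'\in\mathbb{R}^{n\times q}$, $\mathbf{K}=\mathbf{J}\mathbf{J}^{\top}$ positive definite, $\mathbf{S}=\mathbf{J}'\mathbf{J}'^{\top}$, $\sigma>0$, and $\mathbf{Y}\in\mathbb{R}^n\setminus\{0\}$. Define $$\mathcal{R}(\boldsymbol{\theta})=\|\mathbf{Y}-\mathbf{K}(\mathbf{K}+\sigma\mathbf{I})^{-1}\mathbf{Y}\|^2,\qquad \mathcal{R}(\boldsymbol{\theta}\cup\hat{\boldsymbol{\theta}})=\|\mathbf{Y}-(\mathbf{K}+\mathbf{S})(\mathbf{K}+\mathbf{S}+\sigma\mathbf{I})^{-1}\mathbf{Y}\|^2,$$ let $\eta=\|\mathbf{K}^{-1/2}\mathbf{S}\mathbf{K}^{-1/2}\|$ and assume $\eta<1$. If $\kappa(\mathbf{K}+\sigma\mathbf{I})\le c$, then with $a=\frac{c}{(1-\eta)^2}$, $$\frac{\lambda_{\max}(\mathbf{K}+\mathbf{S}+\sigma\mathbf{I})}{a\,\lambda_{\max}(\mathbf{K}+\sigma\mathbf{I})}\le\left(\frac{\mathcal{R}(\boldsymbol{\theta}\cup\hat{\boldsymbol{\theta}})}{\mathcal{R}(\boldsymbol{\theta})}\right)^{1/2}\le\frac{a\,\lambda_{\max}(\mathbf{K}+\mathbf{S}+\sigma\mathbf{I})}{\lambda_{\max}(\mathbf{K}+\sigma\mathbf{I})}.$$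
   Context: $\kappa(\mathbf{A})=\lambda_{\max}(\mathbf{A})/\lambda_{\min}(\mathbf{A})$ is the condition number of a positive definite matrix; norms of matrices are spectral norms. In the application, $\mathbf{K}$ is the neural tangent kernel Gram matrix on training inputs $\mathbf{x}_1,\dots,\mathbf{x}_n$ induced by the trainable parameters $\boldsymbol{\theta}$ ($\mathbf{J}$ = Jacobian of outputs w.r.t. $\boldsymbol{\theta}$), $\mathbf{S}$ is the kernel induced by additional parameters $\hat{\boldsymbol{\theta}}$, $[\mathbf{S}]_{ij}=\nabla_{\hat{\boldsymbol{\theta}}}f(\mathbf{x}_i)\nabla_{\hat{\boldsymbol{\theta}}}f(\mathbf{x}_j)^{\top}$, $\mathbf{Y}$ the training targets, and $\mathcal{R}(\cdot)$ the training squared residual of NTK kernel ridge regression with regularization $\sigma$ for the respective parameter set (the linearized proxy for the empirical risk of fine-tuning those parameters). *)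

(* Defs.v *)
From HB Require Import structures.
From mathcomp Require Import all_boot all_order all_algebra.
From mathcomp Require Import classical_sets reals.
Set Implicit Arguments. Unset Strict Implicit. Unset Printing Implicit Defensive.
Import Order.TTheory GRing.Theory Num.Theory.
Local Open Scope ring_scope.
Local Open Scope classical_set_scope.

Section Defs.
Variable R : realType.

Definition vnorm n (v : 'cV[R]_n) : R := Num.sqrt (\sum_i v i 0 ^+ 2).

Definition specnorm m n (A : 'M[R]_(m, n)) : R :=
  sup [set vnorm (A *m x) | x in [set x : 'cV[R]_n | vnorm x = 1]].

Definition lambda_max n (A : 'M[R]_n) : R := sup [set a | eigenvalue A a].
Definition lambda_min n (A : 'M[R]_n) : R := inf [set a | eigenvalue A a].

Definition cond n (A : 'M[R]_n) : R := lambda_max A / lambda_min A.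

Definition symmetric n (A : 'M[R]_n) : Prop := A^T = A.

Definition posdef n (A : 'M[R]_n) : Prop :=
  symmetric A /\ forall x : 'cV[R]_n, x != 0 -> 0 < (x^T *m A *m x) 0 0.

Definition residual n (G : 'M[R]_n) (sigma : R) (Y : 'cV[R]_n) : R :=
  vnorm (Y - G *m invmx (G + sigma%:M) *m Y) ^+ 2.
End Defs.

(* Main.v *)
Require Import Defs.
From HB Require Import structures.
From mathcomp Require Import all_boot all_order all_algebra.
From mathcomp Require Import classical_sets reals.
From mathcomp Require Import lra ring.
Import Order.TTheory GRing.Theory Num.Theory.
Local Open Scope ring_scope.

Lemma sqle (R:realType) (q r : R) : 0 <= r -> q^+2 <= r^+2 -> q <= r.
Proof. move=> r0 h. case: (lerP q 0) => hq. lra. rewrite -(ler_pXn2r (n:=2)) //; apply/ltW => //. Qed.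

Lemma disc (R : realType) (al be ga : R) : 0 <= ga ->
  (forall t, 0 <= al + 2 * t * be + t ^+ 2 * ga) -> be ^+ 2 <= al * ga.
Proof.
move=> g0 H.
case: (ltrP 0 ga) => gp.
  have := H (- be / ga).
  have -> : al + 2 * (- be / ga) * be + (- be / ga) ^+ 2 * ga = al - be ^+ 2 / ga.
    by field; rewrite gt_eqF.
  rewrite subr_ge0 ler_pdivrMr //.
have g00 : ga = 0 by apply/le_anti; rewrite gp g0.
subst ga. case: (eqVneq be 0) => [->|bn]; first by rewrite expr0n /= mulr0.
have := H (- (al + 1) / (2 * be)).
have -> : al + 2 * (- (al + 1) / (2 * be)) * be + (- (al + 1) / (2 * be)) ^+ 2 * 0 = -1.
  by field.
lra.
Qed.

Section Lin.
Variable R : realType.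
Variable n : nat.
Implicit Types u v w x y : 'cV[R]_n.
Implicit Types M N B : 'M[R]_n.

Definition dot u v : R := (u^T *m v) 0 0.

Lemma dotE u v : dot u v = \sum_i u i 0 * v i 0.
Proof. by rewrite /dot !mxE; apply: eq_bigr => i _; rewrite !mxE. Qed.

Lemma dotC u v : dot u v = dot v u.
Proof. by rewrite !dotE; apply: eq_bigr => i _; rewrite mulrC. Qed.

Lemma dotDr u v w : dot u (v + w) = dot u v + dot u w.
Proof. by rewrite !dotE -big_split; apply: eq_bigr => i _; rewrite !mxE mulrDr. Qed.

Lemma dotZr u a v : dot u (a *: v) = a * dot u v.
Proof. by rewrite !dotE mulr_sumr; apply: eq_bigr => i _; rewrite !mxE mulrCA. Qed.

Lemma dotNr u v : dot u (- v) = - dot u v.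
Proof. by rewrite -scaleN1r dotZr mulN1r. Qed.

Lemma dotBr u v w : dot u (v - w) = dot u v - dot u w.
Proof. by rewrite dotDr dotNr. Qed.

Lemma dotDl u v w : dot (v + w) u = dot v u + dot w u.
Proof. by rewrite dotC dotDr !(dotC u). Qed.

Lemma dotZl u a v : dot (a *: v) u = a * dot v u.
Proof. by rewrite dotC dotZr dotC. Qed.

Lemma dot0r u : dot u 0 = 0.
Proof. by rewrite dotE big1 // => i _; rewrite mxE mulr0. Qed.

Lemma dot0l u : dot 0 u = 0.
Proof. by rewrite dotC dot0r. Qed.

Lemma dot_ge0 u : 0 <= dot u u.
Proof. by rewrite dotE sumr_ge0 // => i _; rewrite -expr2 sqr_ge0. Qed.

Lemma dot_eq0 u : (dot u u == 0) = (u == 0).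
Proof.
apply/idP/idP => [|/eqP->]; last by rewrite dot0r.
rewrite dotE psumr_eq0 => [/allP H|i _]; last by rewrite -expr2 sqr_ge0.
apply/eqP/matrixP => i j; rewrite (ord1 j) mxE.
by have := H i (mem_index_enum _); rewrite /= -expr2 sqrf_eq0 => /eqP.
Qed.

Lemma dot_gt0 u : u != 0 -> 0 < dot u u.
Proof. by move=> h; rewrite lt_def dot_eq0 h dot_ge0. Qed.

Lemma dot_sym M u v : M^T = M -> dot u (M *m v) = dot (M *m u) v.
Proof. by move=> hM; rewrite /dot trmx_mul hM mulmxA. Qed.

Lemma dot_tr M u v : dot u (M *m v) = dot (M^T *m u) v.
Proof. by rewrite /dot trmx_mul trmxK mulmxA. Qed.

Lemma cs_form M u v : M^T = M -> (forall x, 0 <= dot x (M *m x)) ->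
  dot u (M *m v) ^+ 2 <= dot u (M *m u) * dot v (M *m v).
Proof.
move=> hM hp; apply: disc => // t.
have := hp (u + t *: v).
rewrite mulmxDr !dotDl !dotDr -!scalemxAr !dotZl !dotZr (dot_sym M v u hM).
rewrite (dotC (M *m v) u) (dot_sym M u v hM).
set a := dot u _; set b := dot _ v; set c := dot v _ => h.
have -> : a + 2 * t * b + t ^+ 2 * c = a + t * b + (t * b + t * (t * c)) by ring.
exact: h.
Qed.

Lemma cs u v : dot u v ^+ 2 <= dot u u * dot v v.
Proof.
have := @cs_form 1%:M u v; rewrite !mul1mx; apply.
  by rewrite tr_scalar_mx.
by move=> x; rewrite mul1mx dot_ge0.
Qed.

Lemma mulmx_dot B x i : (B *m x) i 0 = dot (row i B)^T x.
Proof. by rewrite dotE !mxE; apply: eq_bigr => j _; rewrite !mxE. Qed.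

Lemma opbound B : exists C, 0 <= C /\ forall x, dot (B *m x) (B *m x) <= C ^+ 2 * dot x x.
Proof.
set C' := \sum_i dot (row i B)^T (row i B)^T.
have C'0 : 0 <= C' by rewrite sumr_ge0 // => i _; apply: dot_ge0.
exists (1 + C'); split; first lra.
move=> x; apply: (@le_trans _ _ (C' * dot x x)).
  rewrite {1}dotE /C' mulr_suml; apply: ler_sum => i _.
  rewrite mulmx_dot -expr2; apply: (le_trans (cs _ _)); lra.
apply: ler_wpM2r; first exact: dot_ge0.
nra.
Qed.

Lemma qbound B : exists D, 0 <= D /\ forall x, `|dot x (B *m x)| <= D * dot x x.
Proof.
have [C [C0 HC]] := opbound B.
exists C; split => // x; apply: sqle; first by rewrite mulr_ge0 // dot_ge0.
rewrite real_normK ?num_real //.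
have h1 := cs x (B *m x); have h2 := HC x; have h3 := dot_ge0 x.
apply: (le_trans h1).
have -> : (C * dot x x) ^+ 2 = dot x x * (C ^+ 2 * dot x x) by ring.
exact: ler_wpM2l.
Qed.

Lemma rayleigh M (x0 : 'cV[R]_n) : x0 != 0 -> M^T = M ->
  exists a, (forall x, dot x (M *m x) <= a * dot x x) /\
            exists2 v : 'cV[R]_n, v != 0 & M *m v = a *: v.
Proof.
move=> x0n hM.
have [D [D0 HD]] := qbound M.
pose E := (fun r : R => exists2 x : 'cV[R]_n, x != 0 & r = dot x (M *m x) / dot x x) : set R.
have hub : ubound E D.
  move=> r [x xn ->]; rewrite ler_pdivrMr ?dot_gt0 //.
  exact: le_trans (ler_norm _) (HD x).
have ne : (E !=set0)%classic by exists (dot x0 (M *m x0) / dot x0 x0); exists x0.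
pose lam := sup E.
have Hub : forall x, dot x (M *m x) <= lam * dot x x.
  move=> x; case: (eqVneq x 0) => [->|xn]; first by rewrite !dot0l mulr0.
  rewrite -ler_pdivrMr ?dot_gt0 //; apply: ub_le_sup; first by exists D.
  by exists x.
exists lam; split => //.
pose N := lam%:M - M.
have NT : N^T = N by rewrite /N linearB /= hM tr_scalar_mx.
have Nq : forall x, dot x (N *m x) = lam * dot x x - dot x (M *m x).
  by move=> x; rewrite /N mulmxBl mul_scalar_mx dotBr dotZr.
have Npsd : forall x, 0 <= dot x (N *m x).
  by move=> x; rewrite Nq subr_ge0.
case: (boolP (N \in unitmx)) => hu.
  exfalso.
  have [C [C0 HC]] := opbound (invmx N).
  have [Dn [Dn0 HDn]] := qbound N.
  have key : forall x, dot x x <= C ^+ 2 * Dn * dot x (N *m x).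
    move=> x.
    have e1 : dot x x <= C ^+ 2 * dot (N *m x) (N *m x).
      by have := HC (N *m x); rewrite mulmxA mulVmx // mul1mx.
    have e2 : dot (N *m x) (N *m x) <= Dn * dot x (N *m x).
      have h := cs_form N x (N *m x) NT Npsd.
      rewrite (dot_sym N x (N *m x) NT) in h.
      have h2 := HDn (N *m x).
      have h3 := ler_norm (dot (N *m x) (N *m (N *m x))).
      have p0 := dot_ge0 (N *m x); have q0 := Npsd x.
      move: h h2 h3 p0 q0.
      set p := dot (N *m x) (N *m x); set q := dot x (N *m x).
      set r := dot (N *m x) _; set s := `|r|.
      move=> h h2 h3 p0 q0.
      have h4 : p ^+ 2 <= q * (Dn * p).
        apply: (le_trans h); apply: ler_wpM2l => //; lra.
      case: (eqVneq p 0) => [->|pn]; first by rewrite mulr_ge0.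
      have pp : 0 < p by rewrite lt_def pn p0.
      rewrite expr2 in h4.
      have : p * p <= (Dn * q) * p by rewrite (_ : Dn * q * p = q * (Dn * p)) //; ring.
      by rewrite ler_pM2r.
    apply: (le_trans e1); rewrite -mulrA; apply: ler_wpM2l => //.
    exact: sqr_ge0.
  pose k := C ^+ 2 * Dn.
  have k0 : 0 <= k by rewrite /k mulr_ge0 // sqr_ge0.
  pose eps := (1 + k)^-1.
  have eps0 : 0 < eps by rewrite /eps invr_gt0; lra.
  have : ubound E (lam - eps).
    move=> r [x xn ->]; rewrite ler_pdivrMr ?dot_gt0 //.
    have := key x; rewrite -/k Nq => h.
    have d0 := dot_gt0 x xn.
    rewrite mulrBl.
    suff : eps * dot x x <= lam * dot x x - dot x (M *m x) by lra.
    rewrite /eps mulrC -ler_pdivlMr ?invr_gt0 ?invrK; last lra.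
    move: h; set q := _ - _; nra.
  move/(ge_sup ne); rewrite -/lam; lra.
move: hu; rewrite unitmxE unitfE negbK => /det0P [v vn vN].
exists v^T; first by rewrite trmx_eq0.
apply/eqP; rewrite eq_sym -subr_eq0 -mul_scalar_mx -mulmxBl -/N.
by rewrite -{1}NT -trmx_mul vN trmx0.
Qed.

Lemma eig_col M a : M^T = M ->
  eigenvalue M a <-> exists2 v : 'cV[R]_n, v != 0 & M *m v = a *: v.
Proof.
move=> hM; split.
  move/eigenvalueP => [v vM vn]; exists v^T; first by rewrite trmx_eq0.
  by rewrite -{1}hM -trmx_mul vM linearZ.
move=> [v vn Mv]; apply/eigenvalueP; exists v^T; last by rewrite trmx_eq0.
by rewrite -{1}hM -trmx_mul Mv linearZ.
Qed.

Lemma lmax M (x0 : 'cV[R]_n) : x0 != 0 -> M^T = M ->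
  (forall x, dot x (M *m x) <= lambda_max M * dot x x) /\
  exists2 v : 'cV[R]_n, v != 0 & M *m v = lambda_max M *: v.
Proof.
move=> x0n hM; have [a [Ha [v vn Mv]]] := rayleigh M x0 x0n hM.
have ea : eigenvalue M a by apply/(eig_col M _ hM); exists v.
suff -> : lambda_max M = a by split => //; exists v.
have ub : ubound [set a | eigenvalue M a]%classic a.
  move=> b /= /(eig_col M _ hM) [w wn Mw].
  have := Ha w; rewrite Mw dotZr ler_pM2r //; exact: dot_gt0.
apply/le_anti/andP; split.
  by apply: ge_sup => //; exists a.
by apply: ub_le_sup => //; exists a.
Qed.

Lemma lmin_eq M : M^T = M -> lambda_min M = - lambda_max (- M).
Proof.
move=> hM; rewrite /lambda_min /inf /lambda_max; congr (- sup _).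
have hN : (- M)^T = - M by rewrite linearN /= hM.
apply/seteqP; split => b /=.
  move=> [c /(eig_col M _ hM) [v vn Mv] <-]; apply/(eig_col (- M) _ hN); exists v => //.
  by rewrite mulNmx Mv scaleNr.
move/(eig_col (- M) _ hN) => [v vn Mv]; exists (- b); last by rewrite opprK.
apply/(eig_col M _ hM); exists v => //.
by rewrite scaleNr -Mv mulNmx opprK.
Qed.

Lemma lmin M (x0 : 'cV[R]_n) : x0 != 0 -> M^T = M ->
  (forall x, lambda_min M * dot x x <= dot x (M *m x)) /\
  exists2 v : 'cV[R]_n, v != 0 & M *m v = lambda_min M *: v.
Proof.
move=> x0n hM.
have hN : (- M)^T = - M by rewrite linearN /= hM.
have [H [v vn Mv]] := lmax (- M) x0 x0n hN.
rewrite lmin_eq //; split.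
  move=> x; have := H x; rewrite mulNmx dotNr mulNr; lra.
exists v => //; rewrite scaleNr -Mv mulNmx opprK //.
Qed.

Lemma vnormE x : vnorm x = Num.sqrt (dot x x).
Proof. by rewrite /vnorm dotE; congr Num.sqrt; apply: eq_bigr => i _; rewrite expr2. Qed.

Lemma vnorm_sq x : vnorm x ^+ 2 = dot x x.
Proof. by rewrite vnormE sqr_sqrtr // dot_ge0. Qed.

Lemma nb_low M l : 0 <= l -> (forall x, l * dot x x <= dot x (M *m x)) ->
  forall x, l ^+ 2 * dot x x <= dot (M *m x) (M *m x).
Proof.
move=> l0 H x.
case: (eqVneq x 0) => [->|xn]; first by rewrite dot0l mulr0 dot_ge0.
have d0 := dot_gt0 x xn.
have h1 := cs x (M *m x).
have h2 : (l * dot x x) ^+ 2 <= dot x (M *m x) ^+ 2.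
  by rewrite ler_pXn2r // ?nnegrE ?mulr_ge0 ?dot_ge0 //; apply: le_trans (H x); rewrite mulr_ge0 ?dot_ge0.
have : l ^+ 2 * dot x x * dot x x <= dot (M *m x) (M *m x) * dot x x.
  rewrite (_ : l ^+ 2 * dot x x * dot x x = (l * dot x x) ^+ 2); last by ring.
  by apply: (le_trans h2); rewrite mulrC.
by rewrite ler_pM2r.
Qed.

Lemma nb_up M L : M^T = M -> 0 <= L -> (forall x, 0 <= dot x (M *m x)) ->
  (forall x, dot x (M *m x) <= L * dot x x) ->
  forall x, dot (M *m x) (M *m x) <= L ^+ 2 * dot x x.
Proof.
move=> hM L0 hp H x.
have h := cs_form M x (M *m x) hM hp.
rewrite (dot_sym M x (M *m x) hM) in h.
have h2 := H (M *m x); have h3 := H x.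
have p0 := dot_ge0 (M *m x); have q0 := hp x.
have d0 := dot_ge0 x.
move: h h2 h3 p0 q0 d0.
set p := dot (M *m x) (M *m x); set q := dot x (M *m x).
set r := dot (M *m x) _; set d := dot x x => h h2 h3 p0 q0 d0.
have h4 : p ^+ 2 <= (L * d) * (L * p).
  apply: (le_trans h); apply: (@le_trans _ _ (q * (L * p))).
    by apply: ler_wpM2l.
  by apply: ler_wpM2r => //; rewrite mulr_ge0.
case: (eqVneq p 0) => [->|pn]; first by rewrite mulr_ge0 // sqr_ge0.
have pp : 0 < p by rewrite lt_def pn p0.
have : p * p <= (L ^+ 2 * d) * p.
  by rewrite -expr2 (_ : L ^+ 2 * d * p = L * d * (L * p)) //; ring.
by rewrite ler_pM2r.
Qed.

Lemma pd_unit M : M^T = M -> (forall x, x != 0 -> 0 < dot x (M *m x)) -> M \in unitmx.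
Proof.
move=> hM H; rewrite unitmxE unitfE; apply/negP => /det0P [v vn vM].
have wn : v^T != 0 by rewrite trmx_eq0.
have := H _ wn; rewrite -hM -trmx_mul vM trmx0 dot0r ltxx //.
Qed.

Lemma residE G s Y : G + s%:M \in unitmx ->
  residual G s Y = s ^+ 2 * dot (invmx (G + s%:M) *m Y) (invmx (G + s%:M) *m Y).
Proof.
move=> hu; rewrite /residual vnorm_sq.
set B := G + s%:M.
have eG : G = B - s%:M by rewrite /B addrK.
have e : Y - G *m invmx B *m Y = s *: (invmx B *m Y).
  rewrite {1}eG mulmxBl mulmxV // mul_scalar_mx mulmxBl mul1mx -scalemxAl.
  by rewrite opprB addrC subrK.
by rewrite e dotZl dotZr mulrA -expr2.
Qed.

Lemma spec_bound B (eta : R) : 0 <= eta ->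
  (forall u, vnorm u = 1 -> vnorm (B *m u) <= eta) ->
  forall x, dot x (B *m x) <= eta * dot x x.
Proof.
move=> e0 H x.
case: (eqVneq x 0) => [->|xn]; first by rewrite !dot0l mulr0.
have d0 := dot_gt0 x xn.
set s := vnorm x.
have s2 : s ^+ 2 = dot x x by rewrite vnorm_sq.
have s0 : 0 < s by rewrite /s vnormE sqrtr_gt0.
set u := s^-1 *: x.
have hu : vnorm u = 1.
  apply/eqP; rewrite -(@eqrXn2 _ 2) // ?vnorm_ge0 //; last by rewrite vnormE sqrtr_ge0.
  rewrite vnorm_sq expr1n /u dotZl dotZr mulrA -expr2 -s2 exprVn mulVf //.
  by rewrite expf_neq0 // gt_eqF.
have h1 := H u hu.
have ex : x = s *: u by rewrite /u scalerA divff ?gt_eqF // scale1r.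
have h2 : dot (B *m x) (B *m x) <= eta ^+ 2 * dot x x.
  rewrite {1 2}ex -scalemxAr dotZl dotZr mulrA -expr2 -vnorm_sq -s2.
  rewrite mulrC; apply: ler_wpM2r; first by rewrite sqr_ge0.
  by rewrite ler_pXn2r // ?nnegrE // vnormE sqrtr_ge0.
apply: sqle; first by rewrite mulr_ge0 // dot_ge0.
apply: (le_trans (cs x (B *m x))).
rewrite (_ : (eta * dot x x) ^+ 2 = dot x x * (eta ^+ 2 * dot x x)); last by ring.
by apply: ler_wpM2l => //; rewrite dot_ge0.
Qed.
End Lin.
Arguments dot {R n}.

Lemma vnorm_ge0 (R : realType) n (x : 'cV[R]_n) : 0 <= vnorm x.
Proof. by rewrite vnormE sqrtr_ge0. Qed.

Lemma normalize (R : realType) n (x : 'cV[R]_n) : x != 0 -> vnorm ((vnorm x)^-1 *: x) = 1.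
Proof.
move=> xn.
have d0 := dot_gt0 _ _ x xn.
have s0 : 0 < vnorm x by rewrite vnormE sqrtr_gt0.
apply/eqP; rewrite -(@eqrXn2 _ 2) // ?vnorm_ge0 //.
rewrite vnorm_sq expr1n dotZl dotZr mulrA -expr2 -vnorm_sq exprVn mulVf //.
by rewrite expf_neq0 // gt_eqF.
Qed.

Lemma final (R : realType) (lA LA lA' LA' eta c r : R) :
 0 < lA -> lA <= lA' -> lA <= LA -> LA <= LA' -> LA' <= (1 + eta) * LA ->
 0 <= eta -> eta < 1 -> LA / lA <= c -> 0 <= r ->
 lA' ^+ 2 * r <= LA ^+ 2 -> lA ^+ 2 <= LA' ^+ 2 * r ->
 LA' / (c / (1 - eta) ^+ 2 * LA) <= Num.sqrt r /\
 Num.sqrt r <= c / (1 - eta) ^+ 2 * LA' / LA.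
Proof.
move=> lA0 h1 h2 h3 h4 e0 e1 hc r0 hr1 hr2.
set rho := Num.sqrt r.
have rho0 : 0 <= rho by apply: sqrtr_ge0.
have rr : rho ^+ 2 = r by rewrite sqr_sqrtr.
have LA0 : 0 < LA by lra.
have LA'0 : 0 < LA' by lra.
have q1 : lA' * rho <= LA.
  apply: sqle; first lra. by rewrite exprMn rr.
have q2 : lA <= LA' * rho.
  apply: sqle; first by rewrite mulr_ge0 //; lra. by rewrite exprMn rr.
have q3 : rho <= LA / lA.
  rewrite ler_pdivlMr //. have : lA * rho <= lA' * rho by apply: ler_wpM2r. lra.
have c0 : LA / lA <= c by [].
have LAl : 1 <= LA / lA by rewrite ler_pdivlMr // mul1r.
set d := (1 - eta) ^+ 2.
have d0 : 0 < d by rewrite /d exprn_gt0 //; lra.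
have d1 : d <= 1 by rewrite /d; nra.
set a := c / d.
have ca : c <= a by rewrite /a ler_pdivlMr //; nra.
have a0 : 0 < a by lra.
split.
  rewrite ler_pdivrMr; last by rewrite mulr_gt0.
  have k1 : LA' ^+ 2 * d <= LA ^+ 2.
    have : LA' ^+ 2 <= ((1 + eta) * LA) ^+ 2 by rewrite ler_pXn2r // ?nnegrE; lra.
    have : (1 + eta) ^+ 2 * d <= 1 by rewrite /d -exprMn exprn_ile1 //; nra.
    rewrite exprMn => hh1 hh2.
    have : LA' ^+ 2 * d <= (1 + eta) ^+ 2 * LA ^+ 2 * d by apply: ler_wpM2r; lra.
    have : (1 + eta) ^+ 2 * LA ^+ 2 * d <= LA ^+ 2.
      rewrite mulrAC; have := sqr_ge0 LA; nra.
    lra.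
  have k2 : LA ^+ 2 <= c * LA * lA.
    have : LA <= c * lA by rewrite -ler_pdivrMr.
    move=> h; have -> : c * LA * lA = c * lA * LA by ring.
    rewrite expr2; apply: ler_wpM2r => //; lra.
  have k3 : LA' ^+ 2 <= a * LA * lA.
    rewrite /a; have : c / d * LA * lA * d = c * LA * lA.
      by field; rewrite gt_eqF.
    move=> e; have : LA' ^+ 2 * d <= c / d * LA * lA * d by rewrite e; lra.
    by rewrite ler_pM2r.
  have k4 : a * LA * lA <= a * LA * (LA' * rho).
    by apply: ler_wpM2l => //; rewrite mulr_ge0 //; lra.
  have : LA' * LA' <= (a * LA * rho) * LA'.
    rewrite -expr2; apply: (le_trans k3); apply: (le_trans k4). 
    by rewrite (_ : a * LA * (LA' * rho) = a * LA * rho * LA') //; ring.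
  by rewrite ler_pM2r // mulrC.
apply: (le_trans q3).
have : a <= a * LA' / LA.
  rewrite -mulrA ler_peMr //; first lra.
  by rewrite ler_pdivlMr // mul1r.
lra.
Qed.


Lemma ar1 {R : realType} (x a b c : R) : x <= a + c -> 0 <= b -> x <= a + b + c.
Proof. lra. Qed.
Lemma ar2 {R : realType} (y a b c : R) : a + b + c <= y -> 0 <= b -> a + c <= y.
Proof. lra. Qed.
Lemma ar3 {R : realType} (k s t e m : R) : s <= e * k -> 0 <= e * t ->
  (1 + e) * (k + t) <= m -> k + s + t <= m.
Proof.
move=> h1 h2; have -> : (1 + e) * (k + t) = k + t + e * k + e * t by ring.
lra.
Qed.
Lemma ar4 {R : realType} (x y : R) : 0 <= y -> y <= x -> 0 <= 1 + x.
Proof. lra. Qed.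

Theorem theorem7 (R : realType) (n p q : nat)
  (J : 'M[R]_(n, p)) (J' : 'M[R]_(n, q)) (sigma c : R) (Y : 'cV[R]_n)
  (Kmh : 'M[R]_n) :
  let K := J *m J^T in
  let S := J' *m J'^T in
  posdef K ->
  0 < sigma ->
  Y != 0 ->
  (* Kmh = K^{-1/2}: the positive definite square root of K^{-1} *)
  posdef Kmh -> Kmh *m Kmh = invmx K ->
  let eta := specnorm (Kmh *m S *m Kmh) in
  eta < 1 ->
  cond (K + sigma%:M) <= c ->
  let a := c / (1 - eta) ^+ 2 in
  let ratio := Num.sqrt (residual (K + S) sigma Y / residual K sigma Y) in
  lambda_max (K + S + sigma%:M) / (a * lambda_max (K + sigma%:M)) <= ratio /\
  ratio <= a * lambda_max (K + S + sigma%:M) / lambda_max (K + sigma%:M).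
Proof.
move=> K S hK s0 Yn hKmh hKK eta he hc a ratio.
have KT : K^T = K by case: hK.
have ST : S^T = S by rewrite /S trmx_mul trmxK.
have KmhT : Kmh^T = Kmh by case: hKmh.
have Kpd : forall x, x != 0 -> 0 < dot x (K *m x).
  by move=> x xn; have := hK.2 x xn; rewrite /dot mulmxA.
have Kpsd : forall x, 0 <= dot x (K *m x).
  move=> x; case: (eqVneq x 0) => [->|xn]; first by rewrite dot0l.
  exact/ltW/Kpd.
have Spsd : forall x, 0 <= dot x (S *m x).
  move=> x; rewrite (_ : dot x (S *m x) = dot (J'^T *m x) (J'^T *m x)).
    exact: dot_ge0.
  by rewrite /dot /S trmx_mul trmxK !mulmxA.
set A := K + sigma%:M; set A' := K + S + sigma%:M.
have AT : A^T = A by rewrite /A linearD /= KT tr_scalar_mx.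
have A'T : A'^T = A' by rewrite /A' !linearD /= KT ST tr_scalar_mx.
have qA : forall x, dot x (A *m x) = dot x (K *m x) + sigma * dot x x.
  by move=> x; rewrite /A mulmxDl mul_scalar_mx dotDr dotZr.
have qA' : forall x, dot x (A' *m x) = dot x (K *m x) + dot x (S *m x) + sigma * dot x x.
  by move=> x; rewrite /A' !mulmxDl mul_scalar_mx !dotDr dotZr.
have Apd : forall x, x != 0 -> 0 < dot x (A *m x).
  move=> x xn; rewrite qA; have := Kpd x xn; have := dot_ge0 _ _ x.
  have := s0; nra.
have A'pd : forall x, x != 0 -> 0 < dot x (A' *m x).
  move=> x xn; rewrite qA'; have := Kpd x xn; have := dot_ge0 _ _ x.
  have := Spsd x; have := s0; nra.
have Apsd : forall x, 0 <= dot x (A *m x).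
  move=> x; case: (eqVneq x 0) => [->|xn]; first by rewrite dot0l.
  exact/ltW/Apd.
have A'psd : forall x, 0 <= dot x (A' *m x).
  move=> x; case: (eqVneq x 0) => [->|xn]; first by rewrite dot0l.
  exact/ltW/A'pd.
have AU : A \in unitmx by apply: pd_unit.
have A'U : A' \in unitmx by apply: pd_unit.
have KU : K \in unitmx by apply: pd_unit.
pose W := Kmh *m K.
have KmhW : Kmh *m W = 1%:M by rewrite /W mulmxA hKK mulVmx.
have WKmh : W *m Kmh = 1%:M by apply: mulmx1C.
pose B := Kmh *m S *m Kmh.
have [C [C0 HC]] := opbound _ _ B.
have hub : forall u, vnorm u = 1 -> vnorm (B *m u) <= eta.
  move=> u hu; apply: ub_le_sup; last by exists u.
  exists C => y [v hv <-]; apply: sqle => //.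
  rewrite vnorm_sq; apply: (le_trans (HC v)).
  by rewrite -vnorm_sq hv expr1n mulr1.
have eta0 : 0 <= eta.
  have := hub _ (normalize _ _ Y Yn); apply: le_trans; exact: vnorm_ge0.
have congK : forall M x, dot (Kmh *m x) (M *m (Kmh *m x)) = dot x ((Kmh *m M *m Kmh) *m x).
  by move=> M x; rewrite dotC dot_tr dotC KmhT !mulmxA.
have hSK : forall y, dot y (S *m y) <= eta * dot y (K *m y).
  move=> y; have ey : y = Kmh *m (W *m y) by rewrite mulmxA KmhW mul1mx.
  rewrite ey !congK (_ : Kmh *m K *m Kmh = 1%:M) ?mul1mx; last by [].
  exact: spec_bound.
have [HlA [vA vAn AvA]] := lmin _ _ A Y Yn AT.
have [HLA [wA wAn AwA]] := lmax _ _ A Y Yn AT.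
have [HlA' [vA' vA'n AvA']] := lmin _ _ A' Y Yn A'T.
have [HLA' [wA' wA'n AwA']] := lmax _ _ A' Y Yn A'T.
set lA := lambda_min A in HlA AvA *.
set LA := lambda_max A in HLA AwA *.
set lA' := lambda_min A' in HlA' AvA' *.
set LA' := lambda_max A' in HLA' AwA' *.
have i1 : sigma <= lA.
  have d0 := dot_gt0 _ _ vA vAn.
  have : sigma * dot vA vA <= lA * dot vA vA.
    rewrite -(dotZr _ _ vA lA vA) -AvA qA; have := Kpsd vA; lra.
  by rewrite ler_pM2r.
have lA0 : 0 < lA by lra.
have i2 : lA <= lA'.
  have d0 := dot_gt0 _ _ vA' vA'n.
  have : lA * dot vA' vA' <= lA' * dot vA' vA'.
    rewrite -(dotZr _ _ vA' lA' vA') -AvA' qA'; have := HlA vA'; rewrite qA => h.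
    apply: ar1. exact: h. exact: Spsd.
  by rewrite ler_pM2r.
have i3 : lA <= LA.
  have d0 := dot_gt0 _ _ vA vAn.
  have : lA * dot vA vA <= LA * dot vA vA by rewrite -(dotZr _ _ vA lA vA) -AvA; apply: HLA.
  by rewrite ler_pM2r.
have i4 : LA <= LA'.
  have d0 := dot_gt0 _ _ wA wAn.
  have : LA * dot wA wA <= LA' * dot wA wA.
    rewrite -(dotZr _ _ wA LA wA) -AwA; have := HLA' wA; rewrite qA qA' => h.
    apply: ar2. exact: h. exact: Spsd.
  by rewrite ler_pM2r.
have i5 : LA' <= (1 + eta) * LA.
  have d0 := dot_gt0 _ _ wA' wA'n.
  have : LA' * dot wA' wA' <= (1 + eta) * LA * dot wA' wA'.
    rewrite -(dotZr _ _ wA' LA' wA') -AwA' qA' -mulrA.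
    have h1 := hSK wA'; have h2 := HLA wA'; rewrite qA in h2.
    have h3 : 0 <= eta * (sigma * dot wA' wA') by rewrite !mulr_ge0 ?dot_ge0 // ltW.
    have h4 : (1 + eta) * (dot wA' (K *m wA') + sigma * dot wA' wA') <= (1 + eta) * (LA * dot wA' wA').
      by apply: ler_wpM2l => //; exact: addr_ge0.
    apply: ar3. exact: h1. exact: h3. exact: h4.
  by rewrite ler_pM2r.
have hc' : LA / lA <= c by [].
set z := invmx A *m Y; set z' := invmx A' *m Y.
have YA : Y = A *m z by rewrite /z mulmxA mulmxV // mul1mx.
have YA' : Y = A' *m z' by rewrite /z' mulmxA mulmxV // mul1mx.
have zn : z != 0 by apply: contraNneq Yn => ez; rewrite YA ez mulmx0.
have dz0 := dot_gt0 _ _ z zn.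
have dz'0 := dot_ge0 _ _ z'.
have r1 : residual K sigma Y = sigma ^+ 2 * dot z z by apply: residE.
have r2 : residual (K + S) sigma Y = sigma ^+ 2 * dot z' z' by apply: residE.
have er : residual (K + S) sigma Y / residual K sigma Y = dot z' z' / dot z z.
  by rewrite r1 r2; field; rewrite ?gt_eqF // ?exprn_gt0.
rewrite /ratio er.
have b1 : lA' ^+ 2 * dot z' z' <= dot Y Y.
  have h := @nb_low _ _ A' lA' (le_trans (ltW lA0) i2) HlA' z'; by rewrite -YA' in h.
have b2 : dot Y Y <= LA ^+ 2 * dot z z.
  have h := @nb_up _ _ A LA AT (le_trans (ltW lA0) i3) Apsd HLA z; by rewrite -YA in h.
have b3 : lA ^+ 2 * dot z z <= dot Y Y.
  have h := @nb_low _ _ A lA (ltW lA0) HlA z; by rewrite -YA in h.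
have b4 : dot Y Y <= LA' ^+ 2 * dot z' z'.
  have h := @nb_up _ _ A' LA' A'T (le_trans (le_trans (ltW lA0) i3) i4) A'psd HLA' z'; by rewrite -YA' in h.
have r0 : 0 <= dot z' z' / dot z z by rewrite divr_ge0 // ltW.
have hr1 : lA' ^+ 2 * (dot z' z' / dot z z) <= LA ^+ 2.
  by rewrite mulrA ler_pdivrMr //; exact: (le_trans b1 b2).
have hr2 : lA ^+ 2 <= LA' ^+ 2 * (dot z' z' / dot z z).
  by rewrite mulrA ler_pdivlMr //; exact: (le_trans b3 b4).
exact: (@final _ _ _ _ _ _ _ _ lA0 i2 i3 i4 i5 eta0 he hc' r0 hr1 hr2).
Qed.
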